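(* Let $(M^n,g)$ be a Riemannian manifold with Levi-Civita connection $\nabla$. Suppose either (i) $M$ is nearly conformally symmetric, i.e. $$\nabla_aR_{bc} - \nabla_b R_{ac} = \frac{1}{2(n-1)}[g_{bc}\nabla_a R - g_{ac}\nabla_{b}R],$$ or (ii) $M$ carries a $(1,3)$-tensor field $K$ satisfying $\nabla_m K_{bce}{}^m = A\, \nabla_m R_{bce}{}^m + B\,(a_{be}\nabla_c \varphi- a_{ce}\nabla_b\varphi)$ (with nonzero constants $A,B$, a smooth function $\varphi$ and a symmetric Codazzi tensor $a_{bc}$) and such that $\nabla_m K_{bce}{}^m=0$ (in particular if $K=0$ or $\nabla_a K_{bcd}{}^e=0$). Then $$R_{am}R_{bce}{}^m + R_{bm}R_{cae}{}^m+ R_{cm}R_{abe}{}^m =0$$ and $$R_{am} R_{bec}{}^m - R_{bm}R_{ace}{}^m + R_{cm} R_{eba}{}^m -R_{em} R_{cab}{}^m =0 .$$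
   Context: Abstract index notation with Einstein summation. $R_{abc}{}^d = \partial_a \Gamma_{bc}^d - \partial_b\Gamma_{ac}^d - \Gamma_{ac}^k\Gamma_{bk}^d + \Gamma_{ak}^d \Gamma_{bc}^k$, Ricci tensor $R_{ac}=R_{abc}{}^b$, scalar curvature $R=g^{ac}R_{ac}$. A Codazzi tensor is a symmetric $(0,2)$ tensor with $\nabla_b a_{cd}=\nabla_c a_{bd}$. *)

(* Defs.v *)
From Stdlib Require Import Reals List ClassicalEpsilon.
Open Scope R_scope.

(** Points of the coordinate space: x : nat -> R; only the first n coordinates
    x 0, ..., x (n-1) are relevant (see [smooth]). *)
Definition Pt := nat -> R.

Fixpoint sumn (n : nat) (F : nat -> R) : R :=
  match n with O => 0 | S m => sumn m F + F m end.

Definition upd (x : Pt) (i : nat) (t : R) : Pt :=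
  fun j => if Nat.eqb j i then t else x j.

Definition has_pd (f : Pt -> R) (i : nat) (x : Pt) (l : R) : Prop :=
  derivable_pt_lim (fun t => f (upd x i t)) (x i) l.

(** The partial derivative (0 if it does not exist). *)
Definition pd (f : Pt -> R) (i : nat) (x : Pt) : R :=
  match excluded_middle_informative (exists l, has_pd f i x l) with
  | left H => proj1_sig (constructive_indefinite_description _ H)
  | right _ => 0
  end.

Fixpoint pds (l : list nat) (f : Pt -> R) : Pt -> R :=
  match l with
  | nil => f
  | i :: l' => fun x => pd (pds l' f) i x
  end.

Definition cont (n : nat) (h : Pt -> R) : Prop :=
  forall x eps, 0 < eps -> exists delta, 0 < delta /\
    forall y, (forall i, (i < n)%nat -> Rabs (y i - x i) < delta) ->
              (forall i, (n <= i)%nat -> y i = x i) ->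
              Rabs (h y - h x) < eps.

Definition smooth (n : nat) (f : Pt -> R) : Prop :=
  (forall x y, (forall i, (i < n)%nat -> x i = y i) -> f x = f y) /\
  (forall l, Forall (fun i => (i < n)%nat) l ->
     cont n (pds l f) /\
     forall i x, (i < n)%nat -> exists d, has_pd (pds l f) i x d).

(** Tensor fields in components: (0,2) tensors [T b c x],
    (1,3) tensors [T b c d e x] with e the upper index. *)
Definition tensor02 := nat -> nat -> Pt -> R.
Definition tensor13 := nat -> nat -> nat -> nat -> Pt -> R.

Definition riemannian (n : nat) (g gi : tensor02) : Prop :=
  (forall i j, (i < n)%nat -> (j < n)%nat -> smooth n (g i j)) /\
  (forall i j, (i < n)%nat -> (j < n)%nat -> smooth n (gi i j)) /\
  (forall i j x, (i < n)%nat -> (j < n)%nat -> g i j x = g j i x) /\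
  (forall x (v : nat -> R), (exists i, (i < n)%nat /\ v i <> 0) ->
      0 < sumn n (fun i => sumn n (fun j => g i j x * v i * v j))) /\
  (forall i k x, (i < n)%nat -> (k < n)%nat ->
      sumn n (fun j => g i j x * gi j k x) = if Nat.eqb i k then 1 else 0).

Section Geometry.
Variables (n : nat) (g gi : tensor02).

Definition Gamma (b c d : nat) (x : Pt) : R :=
  / 2 * sumn n (fun k => gi d k x *
     (pd (g k c) b x + pd (g k b) c x - pd (g b c) k x)).

Definition Riem (a b c d : nat) (x : Pt) : R :=
  pd (Gamma b c d) a x - pd (Gamma a c d) b x
  - sumn n (fun k => Gamma a c k x * Gamma b k d x)
  + sumn n (fun k => Gamma a k d x * Gamma b c k x).

Definition Ric (a c : nat) (x : Pt) : R := sumn n (fun b => Riem a b c b x).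

Definition Scal (x : Pt) : R :=
  sumn n (fun a => sumn n (fun c => gi a c x * Ric a c x)).

Definition cov02 (T : tensor02) (a b c : nat) (x : Pt) : R :=
  pd (T b c) a x
  - sumn n (fun k => Gamma a b k x * T k c x)
  - sumn n (fun k => Gamma a c k x * T b k x).

Definition cov13 (T : tensor13) (a b c d e : nat) (x : Pt) : R :=
  pd (T b c d e) a x
  - sumn n (fun k => Gamma a b k x * T k c d e x)
  - sumn n (fun k => Gamma a c k x * T b k d e x)
  - sumn n (fun k => Gamma a d k x * T b c k e x)
  + sumn n (fun k => Gamma a k e x * T b c d k x).

Definition div13 (T : tensor13) (b c e : nat) (x : Pt) : R :=
  sumn n (fun m => cov13 T m b c e m x).

Definition nearly_conf_symmetric : Prop :=
  forall a b c x, (a < n)%nat -> (b < n)%nat -> (c < n)%nat ->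
    cov02 Ric a b c x - cov02 Ric b a c x =
    / (2 * (INR n - 1)) * (g b c x * pd Scal a x - g a c x * pd Scal b x).

Definition sym_codazzi (t : tensor02) : Prop :=
  (forall i j, (i < n)%nat -> (j < n)%nat -> smooth n (t i j)) /\
  (forall i j x, (i < n)%nat -> (j < n)%nat -> t i j x = t j i x) /\
  (forall b c d x, (b < n)%nat -> (c < n)%nat -> (d < n)%nat ->
     cov02 t b c d x = cov02 t c b d x).

Definition condition_ii : Prop :=
  exists (K : tensor13) (A B : R) (phi : Pt -> R) (t : tensor02),
    A <> 0 /\ B <> 0 /\ smooth n phi /\ sym_codazzi t /\
    (forall b c d e, (b < n)%nat -> (c < n)%nat -> (d < n)%nat -> (e < n)%nat ->
       smooth n (K b c d e)) /\
    (forall b c e x, (b < n)%nat -> (c < n)%nat -> (e < n)%nat ->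
       div13 K b c e x = A * div13 Riem b c e x
                         + B * (t b e x * pd phi c x - t c e x * pd phi b x)) /\
    (forall b c e x, (b < n)%nat -> (c < n)%nat -> (e < n)%nat ->
       div13 K b c e x = 0).

End Geometry.

(* Main.v *)
Require Import Defs.
From Stdlib Require Import Reals List ClassicalEpsilon Lra Lia FunctionalExtensionality Setoid Morphisms.
Open Scope R_scope.

Lemma sumn_ext m F G : (forall k, (k < m)%nat -> F k = G k) -> sumn m F = sumn m G.
Proof. induction m; simpl; intros H; auto. rewrite IHm by (intros; apply H; lia). rewrite H by lia. auto. Qed.
Lemma sumn_plus m F G : sumn m (fun k => F k + G k) = sumn m F + sumn m G.
Proof. induction m; simpl; [ring|rewrite IHm; ring]. Qed.
Lemma sumn_minus m F G : sumn m (fun k => F k - G k) = sumn m F - sumn m G.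
Proof. induction m; simpl; [ring|rewrite IHm; ring]. Qed.
Lemma sumn_opp m F : sumn m (fun k => - F k) = - sumn m F.
Proof. induction m; simpl; [ring|rewrite IHm; ring]. Qed.
Lemma sumn_mult_l m c F : sumn m (fun k => c * F k) = c * sumn m F.
Proof. induction m; simpl; [ring|rewrite IHm; ring]. Qed.
Lemma sumn_mult_r m c F : sumn m (fun k => F k * c) = sumn m F * c.
Proof. induction m; simpl; [ring|rewrite IHm; ring]. Qed.
Lemma sumn_zero m F : (forall k, (k < m)%nat -> F k = 0) -> sumn m F = 0.
Proof. intros H. rewrite (sumn_ext m F (fun _ => 0)) by auto. clear; induction m; simpl; [ring|rewrite IHm; ring]. Qed.
Lemma sumn_swap m p F : sumn m (fun k => sumn p (fun l => F k l)) = sumn p (fun l => sumn m (fun k => F k l)).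
Proof. induction m; simpl.
 - symmetry; apply sumn_zero; auto.
 - rewrite IHm. rewrite <- sumn_plus. auto. Qed.
Lemma sumn_antisym m F : (forall k l, (k < m)%nat -> (l < m)%nat -> F k l = - F l k) ->
  sumn m (fun k => sumn m (fun l => F k l)) = 0.
Proof. intros H.
 assert (E: sumn m (fun k => sumn m (fun l => F k l)) = - sumn m (fun k => sumn m (fun l => F k l))).
 { rewrite sumn_swap at 1. rewrite <- sumn_opp. apply sumn_ext; intros l Hl.
   rewrite <- sumn_opp. apply sumn_ext; intros k Hk. apply H; auto. }
 lra. Qed.
Lemma sumn_delta m c X : (c < m)%nat -> sumn m (fun l => X l * (if Nat.eqb c l then 1 else 0)) = X c.
Proof. induction m; intros Hc; simpl; [lia|].
 destruct (Nat.eq_dec c m) as [->|Hne].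
 - rewrite Nat.eqb_refl. rewrite sumn_zero. ring. intros k Hk.
   destruct (Nat.eqb_spec m k); [lia|ring].
 - rewrite IHm by lia. destruct (Nat.eqb_spec c m); [lia|ring]. Qed.

Lemma upd_same x i t : upd x i t i = t.
Proof. unfold upd. rewrite Nat.eqb_refl. auto. Qed.
Lemma upd_other x i t j : j <> i -> upd x i t j = x j.
Proof. intros H. unfold upd. destruct (Nat.eqb_spec j i); [lia|auto]. Qed.
Lemma upd_upd_same x i s t : upd (upd x i s) i t = upd x i t.
Proof. apply functional_extensionality; intros j. unfold upd. destruct (Nat.eqb j i); auto. Qed.
Lemma upd_id x i : upd x i (x i) = x.
Proof. apply functional_extensionality; intros j. unfold upd. destruct (Nat.eqb_spec j i); subst; auto. Qed.
Lemma upd_comm x i j s t : i <> j -> upd (upd x i s) j t = upd (upd x j t) i s.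
Proof. intros H. apply functional_extensionality; intros k. unfold upd.
 destruct (Nat.eqb_spec k j); destruct (Nat.eqb_spec k i); subst; auto; lia. Qed.

Lemma pd_spec f i x l : has_pd f i x l -> pd f i x = l.
Proof. intro H. unfold pd. destruct (excluded_middle_informative _) as [e|n0].
  - destruct (constructive_indefinite_description _ e) as [l' Hl']. simpl.
    eapply uniqueness_limite; eauto.
  - exfalso; apply n0; eauto. Qed.
Lemma pd_has f i x : (exists l, has_pd f i x l) -> has_pd f i x (pd f i x).
Proof. intros [l H]. rewrite (pd_spec _ _ _ _ H). auto. Qed.

Lemma has_pd_plus f g i x l1 l2 : has_pd f i x l1 -> has_pd g i x l2 -> has_pd (fun y => f y + g y) i x (l1 + l2).
Proof. intros H1 H2. exact (derivable_pt_lim_plus _ _ _ _ _ H1 H2). Qed.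
Lemma has_pd_minus f g i x l1 l2 : has_pd f i x l1 -> has_pd g i x l2 -> has_pd (fun y => f y - g y) i x (l1 - l2).
Proof. intros H1 H2. exact (derivable_pt_lim_minus _ _ _ _ _ H1 H2). Qed.
Lemma has_pd_mult f g i x l1 l2 : has_pd f i x l1 -> has_pd g i x l2 -> has_pd (fun y => f y * g y) i x (l1 * g x + f x * l2).
Proof. intros H1 H2. pose proof (derivable_pt_lim_mult _ _ _ _ _ H1 H2) as H.
 unfold has_pd. cbv beta in H. rewrite upd_id in H. exact H. Qed.
Lemma has_pd_const c i x : has_pd (fun _ => c) i x 0.
Proof. exact (derivable_pt_lim_const c (x i)). Qed.
Lemma has_pd_sumn m F L i x : (forall k, (k < m)%nat -> has_pd (F k) i x (L k)) ->
  has_pd (fun y => sumn m (fun k => F k y)) i x (sumn m L).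
Proof. induction m; intros H; simpl.
 - apply has_pd_const.
 - apply has_pd_plus. apply IHm; intros; apply H; lia. apply H; lia. Qed.

Section Smooth.
Variable n : nat.

Lemma smooth_has_pd f i x : smooth n f -> (i < n)%nat -> has_pd f i x (pd f i x).
Proof. intros [_ H] Hi. apply pd_has. destruct (H nil (Forall_nil _)) as [_ H2]. apply (H2 i x Hi). Qed.
Lemma smooth_cont f : smooth n f -> cont n f.
Proof. intros [_ H]. apply (H nil (Forall_nil _)). Qed.

Lemma pds_app l l' f : pds l (pds l' f) = pds (l ++ l') f.
Proof. induction l; simpl; auto. rewrite IHl. auto. Qed.

Lemma pd_local f i x y : (i < n)%nat -> (forall x y, (forall k, (k < n)%nat -> x k = y k) -> f x = f y) ->
  (forall k, (k < n)%nat -> x k = y k) -> pd f i x = pd f i y.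
Proof. intros Hi Hf Hxy. unfold pd, has_pd.
 replace (fun t => f (upd x i t)) with (fun t => f (upd y i t)).
 rewrite (Hxy i Hi). auto.
 apply functional_extensionality; intros t. apply Hf. intros k Hk. unfold upd.
 destruct (Nat.eqb k i); auto. symmetry; auto. Qed.

Lemma smooth_pd f i : smooth n f -> (i < n)%nat -> smooth n (pd f i).
Proof. intros [H1 H2] Hi. split.
 - intros x y Hxy. apply pd_local; auto.
 - intros l Hl. change (pd f i) with (pds (i :: nil) f). rewrite pds_app. apply H2.
   apply Forall_app; split; auto. Qed.

Lemma smooth_const c : smooth n (fun _ => c).
Proof. split; auto. intros l _.
 assert (E: exists c', pds l (fun _ => c) = fun _ => c').
 { induction l; simpl. exists c; auto. destruct IHl as [c' E]. rewrite E. exists 0.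
   apply functional_extensionality; intros x. apply pd_spec. apply has_pd_const. }
 destruct E as [c' ->]. split.
 - intros x eps He. exists 1. split. lra. intros. rewrite Rminus_diag, Rabs_R0. auto.
 - intros i x _. exists 0. apply has_pd_const. Qed.

Lemma cont_plus f g : cont n f -> cont n g -> cont n (fun x => f x + g x).
Proof. intros Hf Hg x eps He.
 destruct (Hf x (eps/2)) as [d1 [Hd1 H1]]. lra.
 destruct (Hg x (eps/2)) as [d2 [Hd2 H2]]. lra.
 exists (Rmin d1 d2). split. apply Rmin_pos; auto.
 intros y Hy Hy2.
 assert (A1 := H1 y (fun i Hi => Rlt_le_trans _ _ _ (Hy i Hi) (Rmin_l _ _)) Hy2).
 assert (A2 := H2 y (fun i Hi => Rlt_le_trans _ _ _ (Hy i Hi) (Rmin_r _ _)) Hy2).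
 replace (f y + g y - (f x + g x)) with ((f y - f x) + (g y - g x)) by ring.
 eapply Rle_lt_trans. apply Rabs_triang. lra. Qed.

Lemma cont_mult f g : cont n f -> cont n g -> cont n (fun x => f x * g x).
Proof. intros Hf Hg x eps He.
 set (K := 1 + Rabs (f x) + Rabs (g x)).
 assert (HK : 1 <= K) by (unfold K; pose proof (Rabs_pos (f x)); pose proof (Rabs_pos (g x)); lra).
 set (e := Rmin 1 (eps / (2 * K))).
 assert (He1 : 0 < e). { unfold e. apply Rmin_pos. lra. apply Rdiv_lt_0_compat; lra. }
 assert (He2 : e <= 1) by apply Rmin_l.
 assert (He3 : e * K <= eps / 2).
 { assert (e <= eps / (2*K)) by apply Rmin_r.
   apply Rmult_le_compat_r with (r := K) in H; [|lra].
   replace (eps / (2 * K) * K) with (eps/2) in H; auto. field. lra. }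
 destruct (Hf x e) as [d1 [Hd1 H1]]; auto.
 destruct (Hg x e) as [d2 [Hd2 H2]]; auto.
 exists (Rmin d1 d2). split. apply Rmin_pos; auto.
 intros y Hy Hy2.
 assert (A1 := H1 y (fun i Hi => Rlt_le_trans _ _ _ (Hy i Hi) (Rmin_l _ _)) Hy2).
 assert (A2 := H2 y (fun i Hi => Rlt_le_trans _ _ _ (Hy i Hi) (Rmin_r _ _)) Hy2).
 replace (f y * g y - f x * g x) with ((f y - f x) * (g y - g x) + f x * (g y - g x) + g x * (f y - f x)) by ring.
 eapply Rle_lt_trans. apply Rabs_triang.
 eapply Rle_lt_trans. apply Rplus_le_compat_r. apply Rabs_triang.
 rewrite !Rabs_mult.
 pose proof (Rabs_pos (f y - f x)). pose proof (Rabs_pos (g y - g x)).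
 pose proof (Rabs_pos (f x)). pose proof (Rabs_pos (g x)).
 assert (Rabs (f y - f x) * Rabs (g y - g x) <= e * e) by (apply Rmult_le_compat; lra).
 assert (Rabs (f x) * Rabs (g y - g x) <= Rabs (f x) * e) by (apply Rmult_le_compat_l; lra).
 assert (Rabs (g x) * Rabs (f y - f x) <= Rabs (g x) * e) by (apply Rmult_le_compat_l; lra).
 assert (e * e <= e * 1) by (apply Rmult_le_compat_l; lra).
 unfold K in He3. nra. Qed.

Inductive Good : (Pt -> R) -> Prop :=
| Gmul f g : smooth n f -> smooth n g -> Good (fun x => f x * g x)
| Gadd h1 h2 : Good h1 -> Good h2 -> Good (fun x => h1 x + h2 x).

Lemma Good_cont h : Good h -> cont n h.
Proof. induction 1. apply cont_mult; apply smooth_cont; auto. apply cont_plus; auto. Qed.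

Lemma Good_local h : Good h -> forall x y, (forall k, (k < n)%nat -> x k = y k) -> h x = h y.
Proof. induction 1; intros x y Hxy.
 - destruct H as [Hf _], H0 as [Hg _]. rewrite (Hf x y), (Hg x y); auto.
 - rewrite (IHGood1 x y), (IHGood2 x y); auto. Qed.

Lemma Good_pd h : Good h -> forall i, (i < n)%nat -> (forall x, has_pd h i x (pd h i x)) /\ Good (pd h i).
Proof. induction 1; intros i Hi.
 - assert (E : forall x, has_pd (fun x => f x * g x) i x (pd f i x * g x + f x * pd g i x)).
   { intros x. apply has_pd_mult; apply smooth_has_pd; auto. }
   split. intros x. rewrite (pd_spec _ _ _ _ (E x)). auto.
   replace (pd (fun x => f x * g x) i) with (fun x => pd f i x * g x + f x * pd g i x).
   apply Gadd; apply Gmul; auto; apply smooth_pd; auto.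
   apply functional_extensionality; intros x. symmetry; apply pd_spec; auto.
 - destruct (IHGood1 i Hi) as [A1 B1], (IHGood2 i Hi) as [A2 B2].
   assert (E : forall x, has_pd (fun x => h1 x + h2 x) i x (pd h1 i x + pd h2 i x)).
   { intros x. apply has_pd_plus; auto. }
   split. intros x. rewrite (pd_spec _ _ _ _ (E x)). auto.
   replace (pd (fun x => h1 x + h2 x) i) with (fun x => pd h1 i x + pd h2 i x).
   apply Gadd; auto.
   apply functional_extensionality; intros x. symmetry; apply pd_spec; auto. Qed.

Lemma Good_smooth h : Good h -> smooth n h.
Proof. intros Hh. split. apply Good_local; auto.
 intros l Hl. assert (Good (pds l h)).
 { induction l; simpl; auto. inversion Hl; subst.
   apply (Good_pd _ (IHl H2) a H1). }
 split. apply Good_cont; auto.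
 intros i x Hi. exists (pd (pds l h) i x). apply (Good_pd _ H i Hi). Qed.

Lemma smooth_mult f g : smooth n f -> smooth n g -> smooth n (fun x => f x * g x).
Proof. intros; apply Good_smooth; constructor; auto. Qed.

Lemma smooth_plus f g : smooth n f -> smooth n g -> smooth n (fun x => f x + g x).
Proof. intros Hf Hg. replace (fun x => f x + g x) with (fun x => f x * (fun _ => 1) x + g x * (fun _ => 1) x).
 apply Good_smooth. apply Gadd; apply Gmul; auto; apply smooth_const.
 apply functional_extensionality; intros; ring. Qed.

Lemma smooth_scal c f : smooth n f -> smooth n (fun x => c * f x).
Proof. intros Hf. apply (smooth_mult (fun _ => c) f); auto. apply smooth_const. Qed.

Lemma smooth_minus f g : smooth n f -> smooth n g -> smooth n (fun x => f x - g x).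
Proof. intros Hf Hg. replace (fun x => f x - g x) with (fun x => f x + (fun x => -1 * g x) x).
 apply smooth_plus; auto. apply smooth_scal; auto.
 apply functional_extensionality; intros; ring. Qed.

Lemma smooth_sumn m F : (forall k, (k < m)%nat -> smooth n (F k)) -> smooth n (fun x => sumn m (fun k => F k x)).
Proof. induction m; intros H; simpl. apply smooth_const.
 apply (smooth_plus (fun x => sumn m (fun k => F k x)) (F m)). apply IHm; intros; apply H; lia. apply H; lia. Qed.

Lemma pd_plus f g i x : smooth n f -> smooth n g -> (i < n)%nat -> pd (fun y => f y + g y) i x = pd f i x + pd g i x.
Proof. intros; apply pd_spec, has_pd_plus; apply smooth_has_pd; auto. Qed.
Lemma pd_minus f g i x : smooth n f -> smooth n g -> (i < n)%nat -> pd (fun y => f y - g y) i x = pd f i x - pd g i x.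
Proof. intros; apply pd_spec, has_pd_minus; apply smooth_has_pd; auto. Qed.
Lemma pd_mult f g i x : smooth n f -> smooth n g -> (i < n)%nat -> pd (fun y => f y * g y) i x = pd f i x * g x + f x * pd g i x.
Proof. intros; apply pd_spec, has_pd_mult; apply smooth_has_pd; auto. Qed.
Lemma pd_scal c f i x : smooth n f -> (i < n)%nat -> pd (fun y => c * f y) i x = c * pd f i x.
Proof. intros. rewrite (pd_mult (fun _ => c) f); auto. rewrite (pd_spec _ _ _ _ (has_pd_const c i x)). ring. apply smooth_const. Qed.
Lemma pd_sumn m F i x : (forall k, (k < m)%nat -> smooth n (F k)) -> (i < n)%nat ->
  pd (fun y => sumn m (fun k => F k y)) i x = sumn m (fun k => pd (F k) i x).
Proof. intros; apply pd_spec, has_pd_sumn. intros; apply smooth_has_pd; auto. Qed.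

End Smooth.

Lemma pd_line f i x s0 l : has_pd f i (upd x i s0) l -> derivable_pt_lim (fun s => f (upd x i s)) s0 l.
Proof. unfold has_pd. rewrite upd_same.
 replace (fun t => f (upd (upd x i s0) i t)) with (fun s => f (upd x i s)); auto.
 apply functional_extensionality; intros; rewrite upd_upd_same; auto. Qed.

Section Schwarz.
Variable n : nat.

Lemma schwarz_step f i j x h (Hij : i <> j) (Hh : 0 < h)
  (Hfi : forall y, has_pd f i y (pd f i y))
  (HA : forall y, has_pd (pd f i) j y (pd (pd f i) j y)) :
  exists s t, x i < s < x i + h /\ x j < t < x j + h /\
   f (upd (upd x i (x i + h)) j (x j + h)) - f (upd (upd x i (x i + h)) j (x j))
   - f (upd (upd x i (x i)) j (x j + h)) + f (upd (upd x i (x i)) j (x j))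
   = pd (pd f i) j (upd (upd x i s) j t) * h * h.
Proof.
 set (phi := fun s => f (upd (upd x i s) j (x j + h)) - f (upd (upd x i s) j (x j))).
 set (phi' := fun s => pd f i (upd (upd x i s) j (x j + h)) - pd f i (upd (upd x i s) j (x j))).
 assert (Dphi : forall s, derivable_pt_lim phi s (phi' s)).
 { intros s. unfold phi, phi'.
   assert (E: forall u, (fun s => f (upd (upd x i s) j u)) = (fun s => f (upd (upd x j u) i s))).
   { intros u; apply functional_extensionality; intros; rewrite upd_comm; auto. }
   apply (derivable_pt_lim_minus (fun s => f (upd (upd x i s) j (x j + h))) (fun s => f (upd (upd x i s) j (x j)))).
   - rewrite E. apply pd_line. rewrite <- upd_comm by auto. apply Hfi.
   - rewrite E. apply pd_line. rewrite <- upd_comm by auto. apply Hfi. }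
 destruct (MVT_cor2 phi phi' (x i) (x i + h)) as [s [Es Hs]]. lra. intros; apply Dphi.
 set (psi := fun t => pd f i (upd (upd x i s) j t)).
 destruct (MVT_cor2 psi (fun t => pd (pd f i) j (upd (upd x i s) j t)) (x j) (x j + h)) as [t [Et Ht]]. lra.
 { intros c _. unfold psi. apply pd_line. apply HA. }
 exists s, t. split; auto. split; auto.
 unfold phi, phi', psi in *. replace (x i + h - x i) with h in Es by ring.
 replace (x j + h - x j) with h in Et by ring.
 replace (f (upd (upd x i (x i + h)) j (x j + h)) - f (upd (upd x i (x i + h)) j (x j)) -
   f (upd (upd x i (x i)) j (x j + h)) + f (upd (upd x i (x i)) j (x j)))
 with ((f (upd (upd x i (x i + h)) j (x j + h)) - f (upd (upd x i (x i + h)) j (x j))) -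
   (f (upd (upd x i (x i)) j (x j + h)) - f (upd (upd x i (x i)) j (x j)))) by ring.
 rewrite Es, Et. ring. Qed.

Lemma schwarz f i j x : smooth n f -> (i < n)%nat -> (j < n)%nat ->
  pd (pd f i) j x = pd (pd f j) i x.
Proof. intros Hf Hi Hj. destruct (Nat.eq_dec i j) as [->|Hij]; auto.
 assert (Hfi : forall y, has_pd f i y (pd f i y)) by (intros; apply (smooth_has_pd n); auto).
 assert (Hfj : forall y, has_pd f j y (pd f j y)) by (intros; apply (smooth_has_pd n); auto).
 assert (HA : forall y, has_pd (pd f i) j y (pd (pd f i) j y)) by (intros; apply (smooth_has_pd n); auto; apply (smooth_pd n); auto).
 assert (HB : forall y, has_pd (pd f j) i y (pd (pd f j) i y)) by (intros; apply (smooth_has_pd n); auto; apply (smooth_pd n); auto).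
 assert (cA : cont n (pd (pd f i) j)) by (apply (smooth_cont n), (smooth_pd n); auto; apply (smooth_pd n); auto).
 assert (cB : cont n (pd (pd f j) i)) by (apply (smooth_cont n), (smooth_pd n); auto; apply (smooth_pd n); auto).
 set (A := pd (pd f i) j x). set (B := pd (pd f j) i x).
 destruct (Req_dec A B) as [E|Hne]; auto. exfalso.
 set (eps := Rabs (A - B) / 3).
 assert (Heps : 0 < eps). { unfold eps. apply Rdiv_lt_0_compat; [|lra]. apply Rabs_pos_lt. lra. }
 destruct (cA x eps Heps) as [d1 [Hd1 H1]].
 destruct (cB x eps Heps) as [d2 [Hd2 H2]].
 set (h := Rmin d1 d2 / 2).
 assert (Hh : 0 < h) by (unfold h; apply Rdiv_lt_0_compat; [apply Rmin_pos|]; lra).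
 assert (Hh1 : h < d1) by (unfold h; pose proof (Rmin_l d1 d2); pose proof (Rmin_pos d1 d2 Hd1 Hd2); lra).
 assert (Hh2 : h < d2) by (unfold h; pose proof (Rmin_r d1 d2); pose proof (Rmin_pos d1 d2 Hd1 Hd2); lra).
 destruct (schwarz_step f i j x h Hij Hh Hfi HA) as [s [t [Hs [Ht E1]]]].
 assert (Hji : j <> i) by auto.
 destruct (schwarz_step f j i x h Hji Hh Hfj HB) as [s' [t' [Hs' [Ht' E2]]]].
 rewrite !(upd_comm x j i) in E2 by auto.
 assert (Eq : pd (pd f i) j (upd (upd x i s) j t) = pd (pd f j) i (upd (upd x i t') j s')).
 { assert (h * h <> 0) by nra.
   apply (Rmult_eq_reg_r (h*h)); auto. rewrite <- !Rmult_assoc. lra. }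
 assert (C1 : Rabs (pd (pd f i) j (upd (upd x i s) j t) - A) < eps).
 { apply H1.
   - intros k Hk. unfold upd. destruct (Nat.eqb_spec k j). subst; rewrite Rabs_right; lra.
     destruct (Nat.eqb_spec k i). subst; rewrite Rabs_right; lra. rewrite Rminus_diag, Rabs_R0; lra.
   - intros k Hk. unfold upd. destruct (Nat.eqb_spec k j); [lia|]. destruct (Nat.eqb_spec k i); [lia|auto]. }
 assert (C2 : Rabs (pd (pd f j) i (upd (upd x i t') j s') - B) < eps).
 { apply H2.
   - intros k Hk. unfold upd. destruct (Nat.eqb_spec k j). subst; rewrite Rabs_right; lra.
     destruct (Nat.eqb_spec k i). subst; rewrite Rabs_right; lra. rewrite Rminus_diag, Rabs_R0; lra.
   - intros k Hk. unfold upd. destruct (Nat.eqb_spec k j); [lia|]. destruct (Nat.eqb_spec k i); [lia|auto]. }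
 rewrite Eq in C1.
 assert (Rabs (A - B) <= Rabs (pd (pd f j) i (upd (upd x i t') j s') - A) + Rabs (pd (pd f j) i (upd (upd x i t') j s') - B)).
 { replace (A - B) with (- (pd (pd f j) i (upd (upd x i t') j s') - A) + (pd (pd f j) i (upd (upd x i t') j s') - B)) by ring.
   eapply Rle_trans. apply Rabs_triang. rewrite Rabs_Ropp. lra. }
 unfold eps in *. lra.
Qed.
End Schwarz.

Section Alg.
Variable n : nat.
Variables (G : nat -> nat -> nat -> R) (dG : nat -> nat -> nat -> nat -> R)
          (ddG : nat -> nat -> nat -> nat -> nat -> R).

Definition Rm a b c d := dG a b c d - dG b a c d - sumn n (fun k => G a c k * G b k d)
  + sumn n (fun k => G a k d * G b c k).
Definition dRm z a b c d := ddG z a b c d - ddG z b a c d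
  - sumn n (fun k => dG z a c k * G b k d + G a c k * dG z b k d)
  + sumn n (fun k => dG z a k d * G b c k + G a k d * dG z b c k).
Definition C13 (T : nat -> nat -> nat -> nat -> R) (dT : nat -> nat -> nat -> nat -> nat -> R) a b c d e :=
  dT a b c d e - sumn n (fun k => G a b k * T k c d e) - sumn n (fun k => G a c k * T b k d e)
  - sumn n (fun k => G a d k * T b c k e) + sumn n (fun k => G a k e * T b c d k).
Definition C02 (T : nat -> nat -> R) (dT : nat -> nat -> nat -> R) a b c :=
  dT a b c - sumn n (fun k => G a b k * T k c) - sumn n (fun k => G a c k * T b k).

Hypothesis HG : forall a b k, (a < n)%nat -> (b < n)%nat -> G a b k = G b a k.

Lemma Rm_anti a b c d : Rm a b c d = - Rm b a c d.
Proof. unfold Rm.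
 rewrite (sumn_ext _ (fun k => G b c k * G a k d) (fun k => G a k d * G b c k)) by (intros; ring).
 rewrite (sumn_ext _ (fun k => G b k d * G a c k) (fun k => G a c k * G b k d)) by (intros; ring).
 ring. Qed.

Lemma dRm_anti z a b c d : dRm z a b c d = - dRm z b a c d.
Proof. unfold dRm.
 rewrite (sumn_ext _ (fun k => dG z b c k * G a k d + G b c k * dG z a k d)
    (fun k => dG z a k d * G b c k + G a k d * dG z b c k)) by (intros; ring).
 rewrite (sumn_ext _ (fun k => dG z b k d * G a c k + G b k d * dG z a c k)
    (fun k => dG z a c k * G b k d + G a c k * dG z b k d)) by (intros; ring).
 ring. Qed.

Hypothesis HdG : forall z b c d, (b < n)%nat -> (c < n)%nat -> dG z b c d = dG z c b d.

Lemma bianchi1 a b c d : (a < n)%nat -> (b < n)%nat -> (c < n)%nat ->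
  Rm a b c d + Rm b c a d + Rm c a b d = 0.
Proof. intros Ha Hb Hc. unfold Rm.
 assert (E1: sumn n (fun k => G a k d * G b c k) = sumn n (fun k => G c b k * G a k d))
   by (apply sumn_ext; intros; rewrite (HG c b) by auto; ring).
 assert (E2: sumn n (fun k => G b k d * G c a k) = sumn n (fun k => G a c k * G b k d))
   by (apply sumn_ext; intros; rewrite (HG a c) by auto; ring).
 assert (E3: sumn n (fun k => G c k d * G a b k) = sumn n (fun k => G b a k * G c k d))
   by (apply sumn_ext; intros; rewrite (HG b a) by auto; ring).
 rewrite (HdG a c b), (HdG b c a), (HdG c b a) by auto. rewrite E1, E2, E3. ring. Qed.


Hypothesis Hdd : forall z a b c d, (z < n)%nat -> (a < n)%nat -> (b < n)%nat -> (c < n)%nat -> (d < n)%nat -> ddG z a b c d = ddG a z b c d.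

Definition f1 a b c d e k :=
  - (dG a b d k * G c k e + G b d k * dG a c k e) + (dG a b k e * G c d k + G b k e * dG a c d k)
  - G a d k * (dG b c k e - dG c b k e) + G a k e * (dG b c d k - dG c b d k).
Definition f2 a b c d e k l :=
  G a d k * (G b k l * G c l e) - G a d k * (G b l e * G c k l)
  - G a k e * (G b d l * G c l k) + G a k e * (G b l k * G c d l).

Lemma X_exp a b c d e :
  dRm a b c d e - sumn n (fun k => G a d k * Rm b c k e) + sumn n (fun k => G a k e * Rm b c d k)
  = (ddG a b c d e - ddG a c b d e) + sumn n (fun k => f1 a b c d e k + sumn n (fun l => f2 a b c d e k l)).
Proof. unfold dRm.
 rewrite (sumn_plus n (fun k => f1 a b c d e k)).
 replace (ddG a b c d e - ddG a c b d e - sumn n (fun k => dG a b d k * G c k e + G b d k * dG a c k e) +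
  sumn n (fun k => dG a b k e * G c d k + G b k e * dG a c d k) - sumn n (fun k => G a d k * Rm b c k e) +
  sumn n (fun k => G a k e * Rm b c d k))
 with (ddG a b c d e - ddG a c b d e + (sumn n (fun k => - (dG a b d k * G c k e + G b d k * dG a c k e)
   + (dG a b k e * G c d k + G b k e * dG a c d k) - G a d k * Rm b c k e + G a k e * Rm b c d k))).
 2:{ repeat (rewrite sumn_plus || rewrite sumn_minus || rewrite sumn_opp). ring. }
 rewrite <- sumn_plus. f_equal. apply sumn_ext; intros k Hk.
 unfold f1, f2, Rm. rewrite sumn_plus, !sumn_minus, !sumn_mult_l. ring. Qed.

Lemma Y_pair a b c d e : (a < n)%nat -> (b < n)%nat ->
  sumn n (fun k => G a b k * Rm k c d e) + sumn n (fun k => G b a k * Rm c k d e) = 0.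
Proof. intros Ha Hb. rewrite <- sumn_plus. apply sumn_zero; intros k Hk.
 rewrite (HG b a) by auto. rewrite (Rm_anti c k). ring. Qed.

Lemma bianchi2 a b c d e : (a < n)%nat -> (b < n)%nat -> (c < n)%nat -> (d < n)%nat -> (e < n)%nat ->
  C13 Rm dRm a b c d e + C13 Rm dRm b c a d e + C13 Rm dRm c a b d e = 0.
Proof. intros Ha Hb Hc Hd He. unfold C13.
 pose proof (X_exp a b c d e) as X1. pose proof (X_exp b c a d e) as X2. pose proof (X_exp c a b d e) as X3.
 pose proof (Y_pair a b c d e Ha Hb) as Y1. pose proof (Y_pair b c a d e Hb Hc) as Y2.
 pose proof (Y_pair c a b d e Hc Ha) as Y3.
 assert (D : ddG a b c d e - ddG a c b d e + (ddG b c a d e - ddG b a c d e) + (ddG c a b d e - ddG c b a d e) = 0).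
 { rewrite (Hdd b a), (Hdd c b), (Hdd a c) by auto. ring. }
 assert (S : sumn n (fun k => f1 a b c d e k + sumn n (fun l => f2 a b c d e k l))
   + sumn n (fun k => f1 b c a d e k + sumn n (fun l => f2 b c a d e k l))
   + sumn n (fun k => f1 c a b d e k + sumn n (fun l => f2 c a b d e k l)) = 0).
 { rewrite <- !sumn_plus.
   rewrite (sumn_ext _ _ (fun k => (f1 a b c d e k + f1 b c a d e k + f1 c a b d e k) +
        sumn n (fun l => f2 a b c d e k l + f2 b c a d e k l + f2 c a b d e k l))).
   2:{ intros k Hk. rewrite !sumn_plus. unfold f1, f2; cbv beta. ring. }
   rewrite sumn_plus.
   rewrite (sumn_zero n (fun k => f1 a b c d e k + f1 b c a d e k + f1 c a b d e k)).
   rewrite (sumn_antisym n (fun k l => f2 a b c d e k l + f2 b c a d e k l + f2 c a b d e k l)). ring.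
   - intros k l Hk Hl. unfold f2. ring.
   - intros k Hk. unfold f1. ring. }
 lra. Qed.

Lemma contr T dT a c e :
  sumn n (fun m => C13 T dT a c m e m)
  = C02 (fun c e => sumn n (fun m => T c m e m)) (fun a c e => sumn n (fun m => dT a c m e m)) a c e.
Proof. unfold C13, C02.
 rewrite sumn_plus, !sumn_minus.
 assert (E1 : sumn n (fun m => sumn n (fun k => G a c k * T k m e m)) = sumn n (fun k => G a c k * sumn n (fun m => T k m e m))).
 { rewrite sumn_swap. apply sumn_ext; intros; rewrite sumn_mult_l; auto. }
 assert (E2 : sumn n (fun m => sumn n (fun k => G a e k * T c m k m)) = sumn n (fun k => G a e k * sumn n (fun m => T c m k m))).
 { rewrite sumn_swap. apply sumn_ext; intros; rewrite sumn_mult_l; auto. }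
 assert (E3 : sumn n (fun m => sumn n (fun k => G a k m * T c m e k)) = sumn n (fun m => sumn n (fun k => G a m k * T c k e m))).
 { rewrite sumn_swap. auto. }
 rewrite E1, E2, E3. ring. Qed.

Lemma C13_anti a b c d e : C13 Rm dRm a c b d e = - C13 Rm dRm a b c d e.
Proof. unfold C13.
 rewrite (sumn_ext _ (fun k => G a c k * Rm k b d e) (fun k => - (G a c k * Rm b k d e))) by (intros; rewrite (Rm_anti k b); ring).
 rewrite (sumn_ext _ (fun k => G a b k * Rm c k d e) (fun k => - (G a b k * Rm k c d e))) by (intros; rewrite (Rm_anti c k); ring).
 rewrite (sumn_ext _ (fun k => G a d k * Rm c b k e) (fun k => - (G a d k * Rm b c k e))) by (intros; rewrite (Rm_anti c b); ring).
 rewrite (sumn_ext _ (fun k => G a k e * Rm c b d k) (fun k => - (G a k e * Rm b c d k))) by (intros; rewrite (Rm_anti c b); ring).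
 rewrite !sumn_opp. rewrite (dRm_anti a c b). ring. Qed.

Definition Rc c e := sumn n (fun m => Rm c m e m).
Definition dRc a c e := sumn n (fun m => dRm a c m e m).

Lemma div_Rm b c e : (b < n)%nat -> (c < n)%nat -> (e < n)%nat ->
  sumn n (fun m => C13 Rm dRm m b c e m) = - C02 Rc dRc b c e + C02 Rc dRc c b e.
Proof. intros Hb Hc He.
 rewrite (sumn_ext _ _ (fun m => - C13 Rm dRm b c m e m + C13 Rm dRm c b m e m)).
 2:{ intros m Hm. pose proof (bianchi2 m b c e m Hm Hb Hc He Hm) as H. rewrite (C13_anti c b m) in H. lra. }
 rewrite sumn_plus, sumn_opp. rewrite !contr. unfold Rc, dRc. auto. Qed.

Section Ricci.
Variables (T : nat -> nat -> R) (dT : nat -> nat -> nat -> R) (ddT : nat -> nat -> nat -> nat -> R).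
Definition U b c e := C02 T dT b c e.
Definition dU a b c e := ddT a b c e - sumn n (fun k => dG a b c k * T k e + G b c k * dT a k e)
  - sumn n (fun k => dG a b e k * T c k + G b e k * dT a c k).
Definition C03 (U : nat -> nat -> nat -> R) (dU : nat -> nat -> nat -> nat -> R) a b c e :=
  dU a b c e - sumn n (fun k => G a b k * U k c e) - sumn n (fun k => G a c k * U b k e)
  - sumn n (fun k => G a e k * U b c k).

Definition v1 c e a b k := - (dG a b c k * T k e + G b c k * dT a k e) - (dG a b e k * T c k + G b e k * dT a c k)
  - G a c k * dT b k e - G a e k * dT b c k.
Definition v2 c e a b k l := G a c k * (G b k l * T l e) + G a c k * (G b e l * T k l)
  + G a e k * (G b c l * T l k) + G a e k * (G b k l * T c l).

Lemma V_exp a b c e :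
  dU a b c e - sumn n (fun k => G a c k * U b k e) - sumn n (fun k => G a e k * U b c k)
  = ddT a b c e + sumn n (fun k => v1 c e a b k + sumn n (fun l => v2 c e a b k l)).
Proof. unfold dU.
 replace (ddT a b c e - sumn n (fun k => dG a b c k * T k e + G b c k * dT a k e) -
   sumn n (fun k => dG a b e k * T c k + G b e k * dT a c k) - sumn n (fun k => G a c k * U b k e) -
   sumn n (fun k => G a e k * U b c k))
 with (ddT a b c e + sumn n (fun k => - (dG a b c k * T k e + G b c k * dT a k e) -
   (dG a b e k * T c k + G b e k * dT a c k) - G a c k * U b k e - G a e k * U b c k)).
 2:{ repeat (rewrite sumn_plus || rewrite sumn_minus || rewrite sumn_opp). ring. }
 f_equal. apply sumn_ext; intros k Hk.
 unfold v1, v2, U, C02. rewrite !sumn_plus, !sumn_mult_l. ring. Qed.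

Definition r1 a b c e m := (dG a b c m - dG b a c m) * T m e + (dG a b e m - dG b a e m) * T c m.
Definition r2 a b c e m l := - (G a c l * G b l m * T m e) + G a l m * G b c l * T m e
   - G a e l * G b l m * T c m + G a l m * G b e l * T c m.

Lemma RHS_exp a b c e :
  sumn n (fun m => Rm a b c m * T m e) + sumn n (fun m => Rm a b e m * T c m)
  = sumn n (fun m => r1 a b c e m + sumn n (fun l => r2 a b c e m l)).
Proof. rewrite <- sumn_plus. apply sumn_ext; intros m Hm.
 unfold Rm, r1, r2. repeat (rewrite sumn_plus || rewrite sumn_minus || rewrite sumn_opp).
 rewrite !sumn_mult_r. ring. Qed.

Hypothesis HddT : forall a b c e, (a < n)%nat -> (b < n)%nat -> (c < n)%nat -> (e < n)%nat -> ddT a b c e = ddT b a c e.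

Lemma ricci a b c e : (a < n)%nat -> (b < n)%nat -> (c < n)%nat -> (e < n)%nat ->
  C03 U dU a b c e - C03 U dU b a c e
  = - (sumn n (fun m => Rm a b c m * T m e) + sumn n (fun m => Rm a b e m * T c m)).
Proof. intros Ha Hb Hc He. unfold C03.
 assert (Es : sumn n (fun k => G b a k * U k c e) = sumn n (fun k => G a b k * U k c e))
   by (apply sumn_ext; intros; rewrite (HG b a) by auto; auto).
 pose proof (V_exp a b c e) as V1. pose proof (V_exp b a c e) as V2.
 rewrite RHS_exp. rewrite (HddT b a) in V2 by auto.
 assert (K : sumn n (fun k => v1 c e a b k + sumn n (fun l => v2 c e a b k l))
    - sumn n (fun k => v1 c e b a k + sumn n (fun l => v2 c e b a k l))
    + sumn n (fun m => r1 a b c e m + sumn n (fun l => r2 a b c e m l)) = 0).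
 { rewrite !sumn_plus.
   assert (Z1 : sumn n (v1 c e a b) - sumn n (v1 c e b a) + sumn n (r1 a b c e) = 0).
   { rewrite <- sumn_minus, <- sumn_plus. apply sumn_zero; intros; unfold v1, r1; ring. }
   assert (Z2 : sumn n (fun k => sumn n (fun l => v2 c e a b k l)) - sumn n (fun k => sumn n (fun l => v2 c e b a k l))
       + sumn n (fun m => sumn n (fun l => r2 a b c e m l)) = 0).
   { rewrite (sumn_swap n n (fun m l => r2 a b c e m l)).
     rewrite <- sumn_minus, <- sumn_plus.
     rewrite (sumn_ext _ _ (fun k => sumn n (fun l => v2 c e a b k l - v2 c e b a k l + r2 a b c e l k))).
     2:{ intros k Hk. rewrite sumn_plus, sumn_minus. auto. }
     apply sumn_antisym. intros k l Hk Hl. unfold v2, r2. ring. }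
   lra. }
 lra. Qed.

Definition Qf a b c e := sumn n (fun m => T a m * Rm b c e m + T b m * Rm c a e m + T c m * Rm a b e m).

Lemma C03_lin a b c e :
  C03 (fun b c e => U b c e - U c b e) (fun a b c e => dU a b c e - dU a c b e) a b c e
  = C03 U dU a b c e - C03 U dU a c b e.
Proof. unfold C03. cbv beta.
 rewrite (sumn_ext n (fun k => G a b k * (U k c e - U c k e)) (fun k => G a b k * U k c e - G a b k * U c k e)) by (intros; ring).
 rewrite (sumn_ext n (fun k => G a c k * (U b k e - U k b e)) (fun k => G a c k * U b k e - G a c k * U k b e)) by (intros; ring).
 rewrite (sumn_ext n (fun k => G a e k * (U b c k - U c b k)) (fun k => G a e k * U b c k - G a e k * U c b k)) by (intros; ring).
 rewrite !sumn_minus. ring. Qed.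

Lemma cyc_lemma a b c e : (a < n)%nat -> (b < n)%nat -> (c < n)%nat -> (e < n)%nat ->
  C03 (fun b c e => U b c e - U c b e) (fun a b c e => dU a b c e - dU a c b e) a b c e
  + C03 (fun b c e => U b c e - U c b e) (fun a b c e => dU a b c e - dU a c b e) b c a e
  + C03 (fun b c e => U b c e - U c b e) (fun a b c e => dU a b c e - dU a c b e) c a b e
  = - Qf a b c e.
Proof. intros Ha Hb Hc He. rewrite !C03_lin.
 pose proof (ricci a b c e Ha Hb Hc He) as R1. pose proof (ricci b c a e Hb Hc Ha He) as R2.
 pose proof (ricci c a b e Hc Ha Hb He) as R3.
 assert (B0 : sumn n (fun m => Rm a b c m * T m e) + sumn n (fun m => Rm b c a m * T m e)
    + sumn n (fun m => Rm c a b m * T m e) = 0).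
 { rewrite <- !sumn_plus. apply sumn_zero; intros m Hm.
   pose proof (bianchi1 a b c m Ha Hb Hc). nra. }
 assert (Q0 : sumn n (fun m => Rm a b e m * T c m) + sumn n (fun m => Rm b c e m * T a m)
    + sumn n (fun m => Rm c a e m * T b m) = Qf a b c e).
 { unfold Qf. rewrite <- !sumn_plus. apply sumn_ext; intros; ring. }
 lra. Qed.

Lemma Q_second a b c e : (a < n)%nat -> (b < n)%nat -> (c < n)%nat -> (e < n)%nat ->
  sumn n (fun m => T a m * Rm b e c m - T b m * Rm a c e m + T c m * Rm e b a m - T e m * Rm c a b m)
  = Qf a b c e - Qf e c a b.
Proof. intros Ha Hb Hc He. unfold Qf. rewrite <- sumn_minus. apply sumn_ext; intros m Hm.
 pose proof (bianchi1 b e c m Hb He Hc). pose proof (bianchi1 e b a m He Hb Ha).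
 rewrite (Rm_anti c b e m) in H. rewrite (Rm_anti b a e m) in H0.
 assert (E1 : Rm b e c m = Rm b c e m - Rm e c b m) by lra.
 assert (E2 : Rm e b a m = Rm a b e m - Rm a e b m) by lra.
 rewrite E1, E2, (Rm_anti c a e m). ring. Qed.
End Ricci.

Section Cases.
Variables (kk : R) (w : nat -> R) (dw : nat -> nat -> R).
Definition Hs a b := dw a b - sumn n (fun k => G a b k * w k).
Hypothesis Hw : forall a b, (a < n)%nat -> (b < n)%nat -> Hs a b = Hs b a.

Section Case1.
Variables (gg : nat -> nat -> R) (dgg : nat -> nat -> nat -> R).
Hypothesis Hg0 : forall a b c, (a < n)%nat -> (b < n)%nat -> (c < n)%nat -> C02 gg dgg a b c = 0.
Definition E1 b c e := kk * (gg c e * w b - gg b e * w c).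
Definition dE1 a b c e := kk * (dgg a c e * w b + gg c e * dw a b - (dgg a b e * w c + gg b e * dw a c)).

Lemma C03_E1 a b c e : C03 E1 dE1 a b c e
  = kk * (gg c e * Hs a b - gg b e * Hs a c) + kk * (w b * C02 gg dgg a c e - w c * C02 gg dgg a b e).
Proof. unfold C03, C02, Hs, E1, dE1.
 rewrite (sumn_ext n (fun k => G a b k * (kk * (gg c e * w k - gg k e * w c)))
   (fun k => kk * (gg c e * (G a b k * w k)) - kk * (w c * (G a b k * gg k e)))) by (intros; ring).
 rewrite (sumn_ext n (fun k => G a c k * (kk * (gg k e * w b - gg b e * w k)))
   (fun k => kk * (w b * (G a c k * gg k e)) - kk * (gg b e * (G a c k * w k)))) by (intros; ring).
 rewrite (sumn_ext n (fun k => G a e k * (kk * (gg c k * w b - gg b k * w c)))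
   (fun k => kk * (w b * (G a e k * gg c k)) - kk * (w c * (G a e k * gg b k)))) by (intros; ring).
 rewrite !sumn_minus, !sumn_mult_l. ring. Qed.

Lemma case1_cyc a b c e : (a < n)%nat -> (b < n)%nat -> (c < n)%nat -> (e < n)%nat ->
  C03 E1 dE1 a b c e + C03 E1 dE1 b c a e + C03 E1 dE1 c a b e = 0.
Proof. intros. rewrite !C03_E1. rewrite !Hg0 by auto.
 rewrite (Hw b a), (Hw c b), (Hw a c) by auto. ring. Qed.
End Case1.

Section Case2.
Variables (t : nat -> nat -> R) (dt : nat -> nat -> nat -> R).
Hypothesis Hcod : forall a b e, (a < n)%nat -> (b < n)%nat -> (e < n)%nat -> C02 t dt a b e = C02 t dt b a e.
Definition E2 b c e := kk * (t b e * w c - t c e * w b).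
Definition dE2 a b c e := kk * (dt a b e * w c + t b e * dw a c - (dt a c e * w b + t c e * dw a b)).

Lemma C03_E2 a b c e : C03 E2 dE2 a b c e
  = kk * (w c * C02 t dt a b e - w b * C02 t dt a c e + t b e * Hs a c - t c e * Hs a b).
Proof. unfold C03, C02, Hs, E2, dE2.
 rewrite (sumn_ext n (fun k => G a b k * (kk * (t k e * w c - t c e * w k)))
   (fun k => kk * (w c * (G a b k * t k e)) - kk * (t c e * (G a b k * w k)))) by (intros; ring).
 rewrite (sumn_ext n (fun k => G a c k * (kk * (t b e * w k - t k e * w b)))
   (fun k => kk * (t b e * (G a c k * w k)) - kk * (w b * (G a c k * t k e)))) by (intros; ring).
 rewrite (sumn_ext n (fun k => G a e k * (kk * (t b k * w c - t c k * w b)))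
   (fun k => kk * (w c * (G a e k * t b k)) - kk * (w b * (G a e k * t c k)))) by (intros; ring).
 rewrite !sumn_minus, !sumn_mult_l. ring. Qed.

Lemma case2_cyc a b c e : (a < n)%nat -> (b < n)%nat -> (c < n)%nat -> (e < n)%nat ->
  C03 E2 dE2 a b c e + C03 E2 dE2 b c a e + C03 E2 dE2 c a b e = 0.
Proof. intros. rewrite !C03_E2.
 rewrite (Hcod b a), (Hcod c b), (Hcod a c) by auto.
 rewrite (Hw b a), (Hw c b), (Hw a c) by auto. ring. Qed.
End Case2.
End Cases.

Lemma C03_ext (U1 U2 : nat -> nat -> nat -> R) (dU1 dU2 : nat -> nat -> nat -> nat -> R) a b c e :
  (forall p q r, (p < n)%nat -> (q < n)%nat -> (r < n)%nat -> U1 p q r = U2 p q r) ->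
  dU1 a b c e = dU2 a b c e -> (b < n)%nat -> (c < n)%nat -> (e < n)%nat ->
  C03 U1 dU1 a b c e = C03 U2 dU2 a b c e.
Proof. intros HU HdU Hb Hc He. unfold C03. rewrite HdU.
 rewrite (sumn_ext n (fun k => G a b k * U1 k c e) (fun k => G a b k * U2 k c e)) by (intros; rewrite HU; auto).
 rewrite (sumn_ext n (fun k => G a c k * U1 b k e) (fun k => G a c k * U2 b k e)) by (intros; rewrite HU; auto).
 rewrite (sumn_ext n (fun k => G a e k * U1 b c k) (fun k => G a e k * U2 b c k)) by (intros; rewrite HU; auto).
 auto. Qed.
End Alg.

Section Geo.
Variables (n : nat) (g gi : tensor02).
Hypothesis Hr : riemannian n g gi.

Lemma g_sm i j : (i < n)%nat -> (j < n)%nat -> smooth n (g i j).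
Proof. destruct Hr as [H _]. auto. Qed.
Lemma gi_sm i j : (i < n)%nat -> (j < n)%nat -> smooth n (gi i j).
Proof. destruct Hr as [_ [H _]]. auto. Qed.
Lemma g_sym i j : (i < n)%nat -> (j < n)%nat -> g i j = g j i.
Proof. destruct Hr as [_ [_ [H _]]]. intros. apply functional_extensionality; auto. Qed.

Ltac sm := repeat first [ assumption | lia | apply g_sm | apply gi_sm | apply (smooth_pd n)
   | apply (smooth_const n) | apply (smooth_sumn n); intros ? ?
   | apply (smooth_minus n) | apply (smooth_plus n) | apply (smooth_mult n) ].

Lemma Gamma_sm b c d : (b < n)%nat -> (c < n)%nat -> (d < n)%nat -> smooth n (Gamma n g gi b c d).
Proof. intros. unfold Gamma. apply (smooth_scal n). sm. Qed.

Lemma Gamma_sym b c d : (b < n)%nat -> (c < n)%nat -> Gamma n g gi b c d = Gamma n g gi c b d.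
Proof. intros. apply functional_extensionality; intros x. unfold Gamma. f_equal. apply sumn_ext; intros k Hk.
 rewrite (g_sym b c) by auto. ring. Qed.

Ltac sm2 := repeat first [ assumption | lia | apply Gamma_sm | apply g_sm | apply gi_sm | apply (smooth_pd n)
   | apply (smooth_const n) | apply (smooth_sumn n); intros ? ?
   | apply (smooth_minus n) | apply (smooth_plus n) | apply (smooth_mult n) ].

Lemma Riem_sm a b c d : (a < n)%nat -> (b < n)%nat -> (c < n)%nat -> (d < n)%nat -> smooth n (Riem n g gi a b c d).
Proof. intros. unfold Riem. sm2. Qed.

Lemma Ric_sm a c : (a < n)%nat -> (c < n)%nat -> smooth n (Ric n g gi a c).
Proof. intros. unfold Ric. apply (smooth_sumn n). intros. apply Riem_sm; auto. Qed.

Lemma Scal_sm : smooth n (Scal n g gi).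
Proof. unfold Scal. apply (smooth_sumn n); intros. apply (smooth_sumn n); intros.
 apply (smooth_mult n). apply gi_sm; auto. apply Ric_sm; auto. Qed.


Definition GG x := fun b c d => Gamma n g gi b c d x.
Definition dGG x := fun z b c d => pd (Gamma n g gi b c d) z x.
Definition ddGG x := fun z a b c d => pd (pd (Gamma n g gi b c d) a) z x.

Ltac hpd := repeat first [ apply has_pd_minus | apply has_pd_plus | apply has_pd_mult
   | apply has_pd_sumn; intros ? ? | apply (smooth_has_pd n) ].

Lemma has_pd_Riem z a b c d x : (z < n)%nat -> (a < n)%nat -> (b < n)%nat -> (c < n)%nat -> (d < n)%nat ->
  has_pd (Riem n g gi a b c d) z x (dRm n (GG x) (dGG x) (ddGG x) z a b c d).
Proof. intros. unfold Riem, dRm, GG, dGG, ddGG. hpd; sm2. Qed.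


Lemma HG_at x : forall a b k, (a < n)%nat -> (b < n)%nat -> GG x a b k = GG x b a k.
Proof. intros. unfold GG. rewrite Gamma_sym by auto. auto. Qed.
Lemma HdG_at x : forall z b c d, (b < n)%nat -> (c < n)%nat -> dGG x z b c d = dGG x z c b d.
Proof. intros. unfold dGG. rewrite Gamma_sym by auto. auto. Qed.
Lemma Hdd_at x : forall z a b c d, (z < n)%nat -> (a < n)%nat -> (b < n)%nat -> (c < n)%nat -> (d < n)%nat ->
  ddGG x z a b c d = ddGG x a z b c d.
Proof. intros. unfold ddGG. apply (schwarz n). apply Gamma_sm; auto. auto. auto. Qed.

Lemma cov13_eq a b c d e x : (a < n)%nat -> (b < n)%nat -> (c < n)%nat -> (d < n)%nat -> (e < n)%nat ->
  cov13 n g gi (Riem n g gi) a b c d e x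
  = C13 n (GG x) (Rm n (GG x) (dGG x)) (dRm n (GG x) (dGG x) (ddGG x)) a b c d e.
Proof. intros. unfold cov13. rewrite (pd_spec _ _ _ _ (has_pd_Riem a b c d e x ltac:(auto) ltac:(auto) ltac:(auto) ltac:(auto) ltac:(auto))).
 reflexivity. Qed.

Lemma has_pd_Ric a c e x : (a < n)%nat -> (c < n)%nat -> (e < n)%nat ->
  has_pd (Ric n g gi c e) a x (dRc n (GG x) (dGG x) (ddGG x) a c e).
Proof. intros. unfold Ric, dRc. apply has_pd_sumn. intros m Hm. apply has_pd_Riem; auto. Qed.

Lemma cov02_Ric b c e x : (b < n)%nat -> (c < n)%nat -> (e < n)%nat ->
  cov02 n g gi (Ric n g gi) b c e x = C02 n (GG x) (Rc n (GG x) (dGG x)) (dRc n (GG x) (dGG x) (ddGG x)) b c e.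
Proof. intros. unfold cov02. rewrite (pd_spec _ _ _ _ (has_pd_Ric b c e x ltac:(auto) ltac:(auto) ltac:(auto))).
 reflexivity. Qed.

Lemma contracted p q r y : (p < n)%nat -> (q < n)%nat -> (r < n)%nat ->
  cov02 n g gi (Ric n g gi) p q r y - cov02 n g gi (Ric n g gi) q p r y = - div13 n g gi (Riem n g gi) p q r y.
Proof. intros. unfold div13.
 rewrite (sumn_ext _ _ (fun m => C13 n (GG y) (Rm n (GG y) (dGG y)) (dRm n (GG y) (dGG y) (ddGG y)) m p q r m)).
 2:{ intros. apply cov13_eq; auto. }
 rewrite (div_Rm n (GG y) (dGG y) (ddGG y) (HG_at y) (Hdd_at y)) by auto.
 rewrite !cov02_Ric by auto. ring. Qed.

Lemma has_pd_scal c f i x l : has_pd f i x l -> has_pd (fun y => c * f y) i x (c * l).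
Proof. intros H. exact (derivable_pt_lim_scal _ c _ _ H). Qed.

Lemma has_pd_cov02 (T : tensor02) a b c e x : (forall i j, (i < n)%nat -> (j < n)%nat -> smooth n (T i j)) ->
  (a < n)%nat -> (b < n)%nat -> (c < n)%nat -> (e < n)%nat ->
  has_pd (fun y => cov02 n g gi T b c e y) a x
   (dU n (GG x) (dGG x) (fun c e => T c e x) (fun a c e => pd (T c e) a x) (fun a b c e => pd (pd (T c e) b) a x) a b c e).
Proof. intros HT. intros. unfold cov02, dU, GG, dGG. hpd;
 repeat first [ assumption | lia | apply HT | apply Gamma_sm | apply (smooth_pd n) ]. Qed.

Lemma nabla_g a b c x : (a < n)%nat -> (b < n)%nat -> (c < n)%nat -> cov02 n g gi g a b c x = 0.
Proof. intros Ha Hb Hc. destruct Hr as [_ [_ [Hs [_ Hinv]]]].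
 assert (Key : forall a b c, (a < n)%nat -> (b < n)%nat -> (c < n)%nat ->
   sumn n (fun k => Gamma n g gi a b k x * g k c x) = / 2 * (pd (g c b) a x + pd (g c a) b x - pd (g a b) c x)).
 { intros a0 b0 c0 Ha0 Hb0 Hc0. unfold Gamma.
   rewrite (sumn_ext _ _ (fun k => / 2 * sumn n (fun l => (pd (g l b0) a0 x + pd (g l a0) b0 x - pd (g a0 b0) l x) * (g c0 k x * gi k l x)))).
   2:{ intros k Hk. rewrite Rmult_assoc. f_equal.
       rewrite <- sumn_mult_r. apply sumn_ext; intros l Hl. rewrite (Hs k c0 x) by auto. ring. }
   rewrite sumn_mult_l. f_equal. rewrite sumn_swap.
   rewrite (sumn_ext _ _ (fun l => (pd (g l b0) a0 x + pd (g l a0) b0 x - pd (g a0 b0) l x) * (if Nat.eqb c0 l then 1 else 0))).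
   2:{ intros l Hl. rewrite sumn_mult_l. rewrite Hinv by auto. auto. }
   rewrite (sumn_delta n c0 (fun l => pd (g l b0) a0 x + pd (g l a0) b0 x - pd (g a0 b0) l x)) by auto. auto. }
 unfold cov02. rewrite Key by auto.
 rewrite (sumn_ext _ (fun k => Gamma n g gi a c k x * g b k x) (fun k => Gamma n g gi a c k x * g k b x)).
 2:{ intros. rewrite (Hs b k x) by auto. auto. }
 rewrite Key by auto.
 rewrite (g_sym c b), (g_sym b a), (g_sym c a) by auto. field. Qed.

Lemma hess_sym f x : smooth n f -> forall a b, (a < n)%nat -> (b < n)%nat ->
  Hs n (GG x) (fun b => pd f b x) (fun a b => pd (pd f b) a x) a b =
  Hs n (GG x) (fun b => pd f b x) (fun a b => pd (pd f b) a x) b a.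
Proof. intros Hf a b Ha Hb. unfold Hs. rewrite (schwarz n f b a x) by auto.
 f_equal. apply sumn_ext; intros. rewrite HG_at by auto. auto. Qed.

End Geo.

Section Main.
Variables (n : nat) (g gi : tensor02).
Hypothesis Hr : riemannian n g gi.

Lemma main_reduce x a b c e (Ef : nat -> nat -> nat -> Pt -> R) (dE : nat -> nat -> nat -> nat -> R) :
  (a < n)%nat -> (b < n)%nat -> (c < n)%nat -> (e < n)%nat ->
  (forall p q r y, (p < n)%nat -> (q < n)%nat -> (r < n)%nat ->
     cov02 n g gi (Ric n g gi) p q r y - cov02 n g gi (Ric n g gi) q p r y = Ef p q r y) ->
  (forall a b c e, (a < n)%nat -> (b < n)%nat -> (c < n)%nat -> (e < n)%nat -> has_pd (Ef b c e) a x (dE a b c e)) ->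
  C03 n (GG n g gi x) (fun p q r => Ef p q r x) dE a b c e + C03 n (GG n g gi x) (fun p q r => Ef p q r x) dE b c a e
   + C03 n (GG n g gi x) (fun p q r => Ef p q r x) dE c a b e = 0 ->
  Qf n (GG n g gi x) (dGG n g gi x) (fun a m => Ric n g gi a m x) a b c e = 0.
Proof. intros Ha Hb Hc He HEf HdE Hcyc.
 assert (HddT : forall a b c e, (a < n)%nat -> (b < n)%nat -> (c < n)%nat -> (e < n)%nat ->
   (fun a b c e => pd (pd (Ric n g gi c e) b) a x) a b c e = (fun a b c e => pd (pd (Ric n g gi c e) b) a x) b a c e).
 { intros. cbv beta. apply (schwarz n). apply Ric_sm; auto. auto. auto. }
 pose proof (cyc_lemma n (GG n g gi x) (dGG n g gi x) (HG_at n g gi Hr x) (HdG_at n g gi Hr x)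
   (fun c e => Ric n g gi c e x) (fun a c e => pd (Ric n g gi c e) a x) (fun a b c e => pd (pd (Ric n g gi c e) b) a x)
   HddT a b c e Ha Hb Hc He) as Hc0.
 assert (Step : forall a b c e, (a < n)%nat -> (b < n)%nat -> (c < n)%nat -> (e < n)%nat ->
   C03 n (GG n g gi x)
     (fun b0 c0 e0 => U n (GG n g gi x) (fun c e => Ric n g gi c e x) (fun a c e => pd (Ric n g gi c e) a x) b0 c0 e0
                    - U n (GG n g gi x) (fun c e => Ric n g gi c e x) (fun a c e => pd (Ric n g gi c e) a x) c0 b0 e0)
     (fun a0 b0 c0 e0 => dU n (GG n g gi x) (dGG n g gi x) (fun c e => Ric n g gi c e x) (fun a c e => pd (Ric n g gi c e) a x)
                       (fun a b c e => pd (pd (Ric n g gi c e) b) a x) a0 b0 c0 e0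
                   - dU n (GG n g gi x) (dGG n g gi x) (fun c e => Ric n g gi c e x) (fun a c e => pd (Ric n g gi c e) a x)
                       (fun a b c e => pd (pd (Ric n g gi c e) b) a x) a0 c0 b0 e0) a b c e
   = C03 n (GG n g gi x) (fun p q r => Ef p q r x) dE a b c e).
 { intros a0 b0 c0 e0 Ha0 Hb0 Hc0' He0. apply C03_ext; auto.
   - intros p q r Hp Hq Hr'. apply HEf; auto.
   - assert (H1 := has_pd_minus _ _ _ _ _ _ (has_pd_cov02 n g gi Hr (Ric n g gi) a0 b0 c0 e0 x (Ric_sm n g gi Hr) Ha0 Hb0 Hc0' He0)
        (has_pd_cov02 n g gi Hr (Ric n g gi) a0 c0 b0 e0 x (Ric_sm n g gi Hr) Ha0 Hc0' Hb0 He0)).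
     cbv beta in H1.
     replace (fun y => cov02 n g gi (Ric n g gi) b0 c0 e0 y - cov02 n g gi (Ric n g gi) c0 b0 e0 y) with (Ef b0 c0 e0) in H1.
     2:{ apply functional_extensionality; intros y. symmetry; apply HEf; auto. }
     exact (uniqueness_limite _ _ _ _ H1 (HdE a0 b0 c0 e0 Ha0 Hb0 Hc0' He0)). }
 rewrite !Step in Hc0 by auto. lra. Qed.


Ltac sm4 := repeat first [ assumption | lia | apply (smooth_pd n) ].

Lemma first_id x a b c e : (nearly_conf_symmetric n g gi \/ condition_ii n g gi) ->
  (a < n)%nat -> (b < n)%nat -> (c < n)%nat -> (e < n)%nat ->
  Qf n (GG n g gi x) (dGG n g gi x) (fun a m => Ric n g gi a m x) a b c e = 0.
Proof. intros [Hncs | Hii] Ha Hb Hc He.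
 - set (kk := / (2 * (INR n - 1))).
   apply (main_reduce x a b c e (fun p q r y => kk * (g q r y * pd (Scal n g gi) p y - g p r y * pd (Scal n g gi) q y))
     (dE1 kk (fun b => pd (Scal n g gi) b x) (fun a b => pd (pd (Scal n g gi) b) a x)
          (fun c e => g c e x) (fun a c e => pd (g c e) a x))); try assumption.
   + intros a0 b0 c0 e0 Ha0 Hb0 Hc0 He0. unfold dE1. apply has_pd_scal.
     apply has_pd_minus; apply has_pd_mult; apply (smooth_has_pd n); auto;
     first [apply (g_sm n g gi Hr); auto | apply (smooth_pd n); auto; apply (Scal_sm n g gi Hr) | apply (Scal_sm n g gi Hr)].
   + apply (case1_cyc n (GG n g gi x) kk (fun b => pd (Scal n g gi) b x) (fun a b => pd (pd (Scal n g gi) b) a x)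
       (hess_sym n g gi Hr (Scal n g gi) x (Scal_sm n g gi Hr))
       (fun c e => g c e x) (fun a c e => pd (g c e) a x)); auto.
     intros. apply (nabla_g n g gi Hr); auto.
 - destruct Hii as (K & A & B & phi & t & HA & HB & Hphi & Hcod & HK & Hdiv & Hdiv0).
   set (kk := B / A).
   destruct Hcod as [Ht [_ Hcod]].
   apply (main_reduce x a b c e (fun p q r y => kk * (t p r y * pd phi q y - t q r y * pd phi p y))
     (dE2 kk (fun b => pd phi b x) (fun a b => pd (pd phi b) a x)
          (fun c e => t c e x) (fun a c e => pd (t c e) a x))); try assumption.
   + intros p q r y Hp Hq Hr'. rewrite contracted by auto.
     assert (H0 : A * div13 n g gi (Riem n g gi) p q r y + B * (t p r y * pd phi q y - t q r y * pd phi p y) = 0).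
     { rewrite <- Hdiv by auto. apply Hdiv0; auto. }
     apply (Rmult_eq_reg_l A); [| exact HA]. unfold kk.
     replace (A * (B / A * (t p r y * pd phi q y - t q r y * pd phi p y))) with (B * (t p r y * pd phi q y - t q r y * pd phi p y))
       by (field; exact HA). lra.
   + intros a0 b0 c0 e0 Ha0 Hb0 Hc0 He0. unfold dE2. apply has_pd_scal.
     apply has_pd_minus; apply has_pd_mult; apply (smooth_has_pd n); auto;
     first [apply Ht; auto | apply (smooth_pd n); auto ].
   + apply (case2_cyc n (GG n g gi x) kk (fun b => pd phi b x) (fun a b => pd (pd phi b) a x)
       (hess_sym n g gi Hr phi x Hphi)
       (fun c e => t c e x) (fun a c e => pd (t c e) a x)); auto.
     intros. apply Hcod; auto.
Qed.
End Main.

Theorem mainTheorem7 (n : nat) (g gi : tensor02) :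
  (2 <= n)%nat ->
  riemannian n g gi ->
  (nearly_conf_symmetric n g gi \/ condition_ii n g gi) ->
  forall (a b c e : nat) (x : Pt),
    (a < n)%nat -> (b < n)%nat -> (c < n)%nat -> (e < n)%nat ->
    sumn n (fun m => Ric n g gi a m x * Riem n g gi b c e m x
                   + Ric n g gi b m x * Riem n g gi c a e m x
                   + Ric n g gi c m x * Riem n g gi a b e m x) = 0 /\
    sumn n (fun m => Ric n g gi a m x * Riem n g gi b e c m x
                   - Ric n g gi b m x * Riem n g gi a c e m x
                   + Ric n g gi c m x * Riem n g gi e b a m x
                   - Ric n g gi e m x * Riem n g gi c a b m x) = 0.
Proof. intros Hn Hr Hcase a b c e x Ha Hb Hc He. split.
 - exact (first_id n g gi Hr x a b c e Hcase Ha Hb Hc He).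
 - pose proof (Q_second n (GG n g gi x) (dGG n g gi x) (HG_at n g gi Hr x) (HdG_at n g gi Hr x)
      (fun a m => Ric n g gi a m x) a b c e Ha Hb Hc He) as H.
   eapply eq_trans; [exact H|].
   rewrite (first_id n g gi Hr x a b c e Hcase Ha Hb Hc He), (first_id n g gi Hr x e c a b Hcase He Hc Ha Hb). ring.
Qed.
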